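(* Let $p>2$ and let $G_2$ be the spider graph consisting of a center $v_0$ and three legs $v_0x_1x_2\cdots x_p$, $v_0y_1y_2\cdots y_p$, $v_0z_1z_2\cdots z_p$ (paths with $p$ vertices each besides $v_0$); write $x_0=y_0=z_0=v_0$. Let $H_1,\dots,H_{3p}$ be connected graphs, each with at least two vertices, with $m_i=|V(H_i)|$ ordered so that $m_1\le m_2\le\dots\le m_{3p}$. Let $\Gamma=G_2\diamond(H_1,\dots,H_{3p})$ be the generalized edge corona in which, for each $k\in\{0,1,\dots,p-1\}$, every vertex of $H_{3k+1}$ is joined to $x_{p-k}$ and $x_{p-k-1}$, every vertex of $H_{3k+2}$ is joined to $y_{p-k}$ and $y_{p-k-1}$, and every vertex of $H_{3k+3}$ is joined to $z_{p-k}$ and $z_{p-k-1}$ (so $H_{3p-3}$ is the graph joined to $z_1$ and $z_2$, and $H_{3p-2}$ is the graph joined to $x_1$ and $v_0$). Suppose that (i) $\Delta(H_i)\le\delta(H_{i+1})$ for all $i\in\{1,\dots,3p-1\}$; (ii) $d'(x_p)\le\delta'(H_2)$, $d'(y_p)\le\delta'(H_3)$ and $d'(z_p)\le\delta'(H_4)$; (iii) $\Delta'(H_{3p-3})\le |V(H_4)|+1$; (iv) $d'(z_2)\le\delta'(H_{3p-2})$. Then $\Gamma$ is antimagic.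
   Context: All graphs are simple and undirected. A graph $G$ is antimagic if there is a bijection $f:E(G)\to\{1,2,\dots,|E(G)|\}$ such that the vertex sums $w(v)=\sum_{e\ni v}f(e)$ are pairwise distinct over all vertices $v$. For a graph $G$ with $m$ edges $e_1,\dots,e_m$ and graphs $H_1,\dots,H_m$, the generalized edge corona $G\diamond(H_1,\dots,H_m)$ is obtained from disjoint copies of $G,H_1,\dots,H_m$ by joining both end vertices of $e_i$ to every vertex of $H_i$, for each $i$. $\Delta(H)$ and $\delta(H)$ denote the maximum and minimum degree of $H$ itself. For a vertex $v$ of $\Gamma$, $d'(v)$ denotes its degree in $\Gamma$; $\Delta'(H_i)$ and $\delta'(H_i)$ denote the maximum and minimum of $d'(v)$ over $v\in V(H_i)$ (so $d'(v)=\deg_{H_i}(v)+2$ for $v\in V(H_i)$). *)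

(* Defs.v *)
From mathcomp Require Import all_boot.
Set Implicit Arguments. Unset Strict Implicit. Unset Printing Implicit Defensive.

Definition simple_graph (V : finType) (adj : rel V) : Prop :=
  symmetric adj /\ irreflexive adj.

Definition edges (V : finType) (adj : rel V) : {set {set V}} :=
  [set S : {set V} | [exists u, exists v, adj u v && (S == [set u; v])]].

Definition deg (V : finType) (adj : rel V) (v : V) : nat := #|[set w | adj v w]|.

Definition vsum (V : finType) (adj : rel V) (f : {set V} -> nat) (v : V) : nat :=
  \sum_(S in edges adj | v \in S) f S.

(* antimagic: a bijection f : E -> {1..|E|} with pairwise distinct vertex sums.
   (An injection of E into {1,..,|E|} is a bijection onto it.) *)
Definition antimagic (V : finType) (adj : rel V) : Prop :=
  exists f : {set V} -> nat,
    [/\ (forall S, S \in edges adj -> 0 < f S <= #|edges adj|),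
        {in edges adj &, injective f} &
        injective (vsum adj f)].

(* vertices: None = v0 ; Some (j, k) = vertex at position k+1 of leg j
   (leg 0 = x, leg 1 = y, leg 2 = z). *)
Definition spider_vertex (p : nat) := option ('I_3 * 'I_p)%type.

Definition spider_adj (p : nat) (a b : spider_vertex p) : bool :=
  match a, b with
  | Some (j, k), Some (j', k') => (j == j') && ((k.+1 == k' :> nat) || (k'.+1 == k :> nat))
  | None, Some (_, k) => (k == 0 :> nat)
  | Some (_, k), None => (k == 0 :> nat)
  | None, None => false
  end.

(* s is the vertex of leg j at position q (position 0 is the center v0) *)
Definition on_leg (p : nat) (j q : nat) (s : spider_vertex p) : bool :=
  match s with
  | None => q == 0
  | Some (j', k) => (j' == j :> nat) && (k.+1 == q)
  end.

(* ---------- the graphs H_1..H_{3p} ----------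
   They are packed into one finite type T with a map part : T -> 'I_(3p)
   (part t = i means t is a vertex of H_{i+1}); eH is the disjoint union of
   their edge relations (edges never leave a part). *)
Definition H_family (p : nat) (T : finType) (part : T -> 'I_(3 * p)) (eH : rel T) : Prop :=
  simple_graph eH /\ (forall u v, eH u v -> part u = part v).

(* attachment: H_{i+1} (0-based i = 3k + j) is joined to the vertices of leg j
   at positions p - k and p - k - 1. *)
Definition attached (p : nat) (T : finType) (part : T -> 'I_(3 * p))
    (s : spider_vertex p) (t : T) : bool :=
  let i := nat_of_ord (part t) in
  on_leg (i %% 3) (p - i %/ 3) s || on_leg (i %% 3) (p - i %/ 3 - 1) s.

Definition Gamma_vertex (p : nat) (T : finType) := (spider_vertex p + T)%type.

Definition Gamma_adj (p : nat) (T : finType) (part : T -> 'I_(3 * p)) (eH : rel T)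
    (a b : Gamma_vertex p T) : bool :=
  match a, b with
  | inl s, inl s' => spider_adj s s'
  | inr u, inr v => eH u v
  | inl s, inr t => attached part s t
  | inr t, inl s => attached part s t
  end.

Definition Hverts (p : nat) (T : finType) (part : T -> 'I_(3 * p)) (i : nat) : {set T} :=
  [set t | nat_of_ord (part t) == i].

Definition legv (p : nat) (j q : nat) : spider_vertex p :=
  if q is q'.+1 then
    (if @insub _ (fun k => k < p) _ q' is Some k then Some (inord j : 'I_3, k) else None)
  else None.

(* Main.v *)
Require Import Defs.
From mathcomp Require Import all_boot zify.
Set Implicit Arguments. Unset Strict Implicit. Unset Printing Implicit Defensive.

Section Generic.
Variable V : finType.

Definition setfun (h : V -> V -> nat) (S : {set V}) : nat :=
  \max_(a in S) \max_(b in S) (if a == b then 0 else h a b).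

Lemma setfun2 h a b : a != b -> h a b = h b a -> setfun h [set a; b] = h a b.
Proof.
move=> nab hs; rewrite /setfun.
have nb : a \notin [set b] by rewrite in_set1.
rewrite big_setU1 //= big_set1 !big_setU1 //= !big_set1 !eqxx (negPf nab).
by rewrite eq_sym (negPf nab) hs max0n maxn0 maxnn.
Qed.

Variable adj : rel V.
Hypothesis sg : simple_graph adj.

Lemma vsum_nb h : (forall a b, adj a b -> h a b = h b a) ->
  forall v, vsum adj (setfun h) v = \sum_(w | adj v w) h v w.
Proof.
move=> hs v; case: sg => sym irr.
have ne w : adj v w -> v != w by apply: contraTneq => ->; rewrite irr.
rewrite /vsum.
rewrite (eq_bigl (fun S => S \in [set [set v; w] | w in [set w | adj v w]])); last first.
  move=> S /=; apply/andP/imsetP.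
  - rewrite inE; case=> /existsP [u /existsP [w /andP [huw /eqP ->]]].
    rewrite !inE => /orP [/eqP ->|/eqP ->].
      by exists w; rewrite // inE.
    by exists u; [rewrite inE sym | rewrite setUC].
  - case=> w; rewrite inE => hw ->; split; last by rewrite !inE eqxx.
    by rewrite inE; apply/existsP; exists v; apply/existsP; exists w; rewrite hw eqxx.
rewrite big_imset /=; last first.
  move=> w w'; rewrite !inE => hw hw' e.
  have : w \in [set v; w'] by rewrite -e !inE eqxx orbT.
  rewrite !inE => /orP [/eqP hh|/eqP //]; by move: (ne _ hw); rewrite hh eqxx.
apply: eq_big => w; first by rewrite inE.
by move=> hw; rewrite inE in hw; rewrite setfun2 ?ne //; apply: hs.
Qed.
End Generic.

Section Rank.
Variables (X : finType) (A : {set X}) (g : X -> nat).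
Definition rk (x : nat) := #|[set S in A | g S <= x]|.

Lemma rk_mono x y : x <= y -> rk x <= rk y.
Proof.
move=> xy; apply: subset_leq_card; apply/subsetP => S; rewrite !inE => /andP [-> h].
exact: leq_trans h xy.
Qed.

Lemma rk_lt x a : a \in A -> x < g a -> rk x < rk (g a).
Proof.
move=> aA xa; apply: proper_card; apply/properP; split.
  apply/subsetP => S; rewrite !inE => /andP [-> h]; exact: leq_trans h (ltnW xa).
by exists a; rewrite !inE ?aA ?leqnn // -ltnNge.
Qed.

Lemma rk_pos a : a \in A -> 0 < rk (g a).
Proof. by move=> aA; apply/card_gt0P; exists a; rewrite !inE aA leqnn. Qed.

Lemma rk_le x : rk x <= #|A|.
Proof. by apply: subset_leq_card; apply/subsetP => S; rewrite !inE => /andP []. Qed.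

Hypothesis ginj : {in A &, injective g}.

Lemma rk_succ x a : a \in A -> g a = x.+1 -> rk x.+1 = (rk x).+1.
Proof.
move=> aA ga; rewrite /rk.
have -> : [set S in A | g S <= x.+1] = a |: [set S in A | g S <= x].
  apply/setP => S; rewrite !inE; case: (eqVneq S a) => [->|ne] /=.
    by rewrite aA ga leqnn.
  case SA: (S \in A) => //=; rewrite leq_eqVlt ltnS; case: eqP => //= e.
  by move: ne; rewrite (ginj SA aA) ?eqxx // e ga.
by rewrite cardsU1 !inE aA ga ltnn.
Qed.

Lemma rk_inj a b : a \in A -> b \in A -> rk (g a) = rk (g b) -> a = b.
Proof.
move=> aA bA e; apply: ginj => //.
case: (ltngtP (g a) (g b)) => // h.
  by have := rk_lt bA h; rewrite e ltnn.
by have := rk_lt aA h; rewrite e ltnn.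
Qed.
End Rank.

Lemma sum_unif (I : finType) (A B : {set I}) (g h : I -> nat) :
  #|A| <= #|B| -> (forall a b, a \in A -> b \in B -> g a <= h b) ->
  \sum_(a in A) g a <= \sum_(b in B) h b.
Proof.
move=> AB gh; case: (set_0Vmem A) => [->|[a0 Ha0]]; first by rewrite big_set0.
set G := \max_(a in A) g a.
apply: (@leq_trans (\sum_(a in A) G)).
  by apply: leq_sum => a aA; apply: leq_bigmax_cond.
rewrite sum_nat_const; apply: (@leq_trans (\sum_(b in B) G)).
  by rewrite sum_nat_const leq_mul2r AB orbT.
apply: leq_sum => b bB; apply/bigmax_leqP => a aA; exact: gh.
Qed.

Lemma lex_lt a b n m : a < n -> b < m -> a * m + b < n * m.
Proof. move=> an bm; apply: (@leq_trans (a.+1 * m)); first by rewrite mulSn; lia.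
by rewrite leq_mul2r an orbT. Qed.

Lemma lex_le a b c d m : b < m -> d < m -> a * m + b <= c * m + d -> a <= c.
Proof. move=> bm dm h; rewrite leqNgt; apply/negP => ca.
have := lex_lt ca dm; have := leq_addr b (a * m); lia. Qed.

Lemma lex_eq a b c d m : b < m -> d < m -> a * m + b = c * m + d -> a = c /\ b = d.
Proof. move=> bm dm h.
have ac : a = c by apply/eqP; rewrite eqn_leq (lex_le bm dm) ?h // (lex_le dm bm) ?h.
by split => //; move: h; rewrite ac => /addnI.
Qed.

Section Main.
Variables (p : nat) (T : finType) (part : T -> 'I_(3 * p)).
Hypothesis p_gt2 : 2 < p.

Local Notation SV := (spider_vertex p).
Local Notation V := (Gamma_vertex p T).

Definition ix (s : SV) : nat := if s is Some w then 3 * (p.-1 - w.2) + w.1 else 3 * p.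

Lemma ltpm1 n : p.-1 - n < p.
Proof. lia. Qed.

Definition spv (i : nat) : SV :=
  if i < 3 * p then Some (inord (i %% 3), Ordinal (ltpm1 (i %/ 3))) else None.

Lemma ix_lt w : ix (Some w) < 3 * p.
Proof. case: w => [a k] /=; have := ltn_ord a; have := ltn_ord k; lia. Qed.

Lemma ix_le s : ix s <= 3 * p.
Proof. by case: s => [w|//]; apply: ltnW; apply: ix_lt. Qed.

Lemma ix_spv i : ix (spv i) = minn i (3 * p).
Proof.
rewrite /spv; case: ifP => hi /=; last by lia.
rewrite inordK; last by lia.
lia.
Qed.

Lemma spv_ix s : spv (ix s) = s.
Proof.
case: s => [[a k]|]; last by rewrite /spv /= ltnn.
rewrite /spv ix_lt; congr Some.
have ha := ltn_ord a; have hk := ltn_ord k.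
congr pair; apply: val_inj => /=; first rewrite inordK; lia.
Qed.

Lemma ix_inj : injective ix.
Proof. exact: can_inj spv_ix. Qed.

Lemma eq_spv s j : (s == spv j) = (ix s == minn j (3 * p)).
Proof.
apply/eqP/eqP => [->|h]; first by rewrite ix_spv.
apply: ix_inj; rewrite h ix_spv; lia.
Qed.

Lemma attachedE s t :
  attached part s t = (ix s == part t) || (ix s == minn (part t + 3) (3 * p)).
Proof.
have hi := ltn_ord (part t).
rewrite /attached; case: s => [[a k]|] /=.
  have ha := ltn_ord a; have hk := ltn_ord k; lia.
lia.
Qed.

Lemma spider_adjE s s' : spider_adj s s' =
  ((ix s < 3 * p) && (ix s' == minn (ix s + 3) (3 * p))) ||
  ((ix s' < 3 * p) && (ix s == minn (ix s' + 3) (3 * p))).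
Proof.
case: s => [[a k]|]; case: s' => [[b l]|] /=.
- have ha := ltn_ord a; have hk := ltn_ord k; have hb := ltn_ord b; have hl := ltn_ord l.
  change (a == b) with (nat_of_ord a == nat_of_ord b). lia.
- have ha := ltn_ord a; have hk := ltn_ord k; lia.
- have hb := ltn_ord b; have hl := ltn_ord l; lia.
- lia.
Qed.

Variable eH : rel T.
Hypothesis Hfam : H_family part eH.
Hypothesis Hsz : forall i : 'I_(3 * p), 2 <= #|Hverts part i|.
Hypothesis Hmono : forall i j : 'I_(3 * p), i <= j -> #|Hverts part i| <= #|Hverts part j|.
Hypothesis Hdeg : forall (i : nat) (u v : T), i.+1 < 3 * p ->
  u \in Hverts part i -> v \in Hverts part i.+1 -> deg eH u <= deg eH v.

Local Notation adj := (Gamma_adj part eH).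
Local Notation E := (edges adj).

Lemma sgG : simple_graph adj.
Proof.
case: Hfam => [[sym irr] _]; split.
- case=> [s|u] [s'|v] /=; [by rewrite !spider_adjE orbC | by [] | by [] | exact: sym].
- case=> [s|u] /=; last exact: irr.
  rewrite spider_adjE; lia.
Qed.

Definition C := #|T|.
Definition idx (t : T) : nat := enum_rank t.
Definition pidx u v := minn (idx u) (idx v) * C + maxn (idx u) (idx v).
Definition isc u v := part u * (C * C) + pidx u v.
Definition Z1 := 3 * p * (C * C).
Definition scI (a b : V) := match a, b with inr u, inr v => isc u v | _, _ => Z1 end.
Definition RkI := rk E (setfun scI).
Definition P t := \sum_(w | eH t w) RkI (isc t w).
Definition PB := (\sum_t P t).+1.
Definition key t := part t * (PB * C) + (P t * C + idx t).
Definition KB := 3 * p * (PB * C).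
Definition Z2 := Z1 + 2 * KB.
Definition nb (s : SV) (t : T) := ix s == minn (part t + 3) (3 * p).
Definition sc (fl : T -> bool) (a b : V) : nat :=
  match a, b with
  | inr u, inr v => isc u v
  | inl s, inr t => Z1 + (2 * key t + (nb s t (+) fl t))
  | inr t, inl s => Z1 + (2 * key t + (nb s t (+) fl t))
  | inl s, inl s' => Z2 + minn (ix s) (ix s')
  end.

Lemma idx_lt t : idx t < C.
Proof. exact: ltn_ord. Qed.

Lemma idx_inj : injective idx.
Proof. by move=> u v /ord_inj /enum_rank_inj. Qed.

Lemma pidx_lt u v : pidx u v < C * C.
Proof. apply: lex_lt; have := idx_lt u; have := idx_lt v; lia. Qed.

Lemma isc_lt u v : isc u v < Z1.
Proof. by apply: lex_lt => //; apply: pidx_lt. Qed.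

Lemma P_lt t : P t < PB.
Proof. by rewrite /PB ltnS (bigD1 t) //= leq_addr. Qed.

Lemma key_lt t : key t < KB.
Proof. apply: lex_lt => //; apply: lex_lt; [exact: P_lt | exact: idx_lt]. Qed.

Lemma key_inj : injective key.
Proof.
move=> u v /lex_eq [||_ /lex_eq [||_ /idx_inj] //]; try apply: lex_lt;
  rewrite ?P_lt ?idx_lt //.
Qed.

Lemma key_part u v : key u <= key v -> part u <= part v.
Proof. apply: lex_le; apply: lex_lt; rewrite ?P_lt ?idx_lt //. Qed.

Lemma part_key u v : part u < part v -> key u < key v.
Proof.
move=> h; apply: leq_trans (leq_addr _ _); apply: lex_lt => //.
apply: lex_lt; rewrite ?P_lt ?idx_lt //.
Qed.

Lemma key_P u v : part u = part v -> key u <= key v -> P u <= P v.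
Proof.
rewrite /key => ->; rewrite leq_add2l => h; apply: lex_le h; apply: idx_lt.
Qed.

Lemma part_adj u v : eH u v -> part u = part v.
Proof. by case: Hfam => _; apply. Qed.

Lemma sc_sym fl a b : adj a b -> sc fl a b = sc fl b a.
Proof.
case: a b => [s|u] [s'|v] //= h; first by rewrite minnC.
by rewrite /isc /pidx (part_adj h) minnC maxnC.
Qed.

Lemma spoke_eq fl s t s' t' : attached part s t -> attached part s' t' ->
  2 * key t + (nb s t (+) fl t) = 2 * key t' + (nb s' t' (+) fl t') -> s = s' /\ t = t'.
Proof.
move=> h h' e.
have kt : key t = key t' by move: e; case: (nb s t (+) fl t); case: (nb s' t' (+) fl t'); lia.
move: (key_inj kt) => tt'; subst t'; split => //.
have : nb s t = nb s' t by move: e; case: (fl t); case: (nb s t); case: (nb s' t); lia.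
move: h h'; rewrite !attachedE /nb => h h' hb; apply: ix_inj; lia.
Qed.

Lemma spider_eq s1 s2 s1' s2' : spider_adj s1 s2 -> spider_adj s1' s2' ->
  minn (ix s1) (ix s2) = minn (ix s1') (ix s2') ->
  (s1 = s1' /\ s2 = s2') \/ (s1 = s2' /\ s2 = s1').
Proof.
rewrite !spider_adjE => h h' e.
have : (ix s1 = ix s1' /\ ix s2 = ix s2') \/ (ix s1 = ix s2' /\ ix s2 = ix s1') by lia.
by case=> [[/ix_inj -> /ix_inj ->]|[/ix_inj -> /ix_inj ->]]; [left|right].
Qed.

Lemma int_eq u v u' v' : isc u v = isc u' v' ->
  (u = u' /\ v = v') \/ (u = v' /\ v = u').
Proof.
rewrite /isc => e.
have [_ e'] := lex_eq (pidx_lt u v) (pidx_lt u' v') e.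
have mx x y : maxn (idx x) (idx y) < C by have := idx_lt x; have := idx_lt y; lia.
have [e1 e2] := lex_eq (mx u v) (mx u' v') e'.
have : (idx u = idx u' /\ idx v = idx v') \/ (idx u = idx v' /\ idx v = idx u') by lia.
by case=> [[/idx_inj -> /idx_inj ->]|[/idx_inj -> /idx_inj ->]]; [left|right].
Qed.

Lemma sc_inj fl a b a' b' : adj a b -> adj a' b' -> sc fl a b = sc fl a' b' ->
  [set a; b] = [set a'; b'].
Proof.
have hZ : Z1 + 2 * KB = Z2 by [].
case: a b => [s|u] [s'|v]; case: a' b' => [r|u'] [r'|v'] /= h h' e;
  try (have := key_lt; have := isc_lt; move: e; rewrite /Z2; 
       repeat match goal with |- context [key ?t] => have := key_lt t; move: (key t) => ? end;
       repeat match goal with |- context [isc ?x ?y] => have := isc_lt x y; move: (isc x y) => ? end;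
       repeat match goal with |- context [nb ?x ?y (+) ?z] => move: (nb x y (+) z) => [] end;
       repeat match goal with |- context [minn (ix ?x) (ix ?y)] => move: (minn (ix x) (ix y)) => ? end;
       lia).
- have [[-> ->]|[-> ->]] := spider_eq h h' (addnI e) => //; exact: setUC.
- by have [-> ->] := spoke_eq h h' (addnI e).
- by have [-> ->] := spoke_eq h h' (addnI e); rewrite setUC.
- by have [-> ->] := spoke_eq h h' (addnI e); rewrite setUC.
- by have [-> ->] := spoke_eq h h' (addnI e).
- have [[-> ->]|[-> ->]] := int_eq e => //; exact: setUC.
Qed.

Definition fl0 : T -> bool := fun=> false.
Definition sc0S := setfun (sc fl0).
Definition Rk := rk E sc0S.
Definition lab fl (a b : V) := Rk (sc fl a b).
Definition ff fl := setfun (lab fl).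

Lemma adj_neq a b : adj a b -> a != b.
Proof. by case: sgG => _ irr; apply: contraTneq => ->; rewrite irr. Qed.

Lemma edge_in a b : adj a b -> [set a; b] \in E.
Proof. by move=> h; rewrite inE; apply/existsP; exists a; apply/existsP; exists b; rewrite h eqxx. Qed.

Lemma edgeP S : S \in E -> exists a b, adj a b /\ S = [set a; b].
Proof. by rewrite inE => /existsP [a /existsP [b /andP [h /eqP ->]]]; exists a, b. Qed.

Lemma sc0S_edge a b : adj a b -> sc0S [set a; b] = sc fl0 a b.
Proof. by move=> h; rewrite /sc0S setfun2 ?adj_neq //; apply: sc_sym. Qed.

Lemma sc0S_inj : {in E &, injective sc0S}.
Proof.
move=> S S' /edgeP [a [b [h ->]]] /edgeP [a' [b' [h' ->]]].
rewrite !sc0S_edge //; exact: sc_inj.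
Qed.

Lemma Rk_lt a b x : adj a b -> x < sc fl0 a b -> Rk x < Rk (sc fl0 a b).
Proof. by move=> h; rewrite -sc0S_edge //; apply: rk_lt; apply: edge_in. Qed.

Lemma Rk_succ a b x : adj a b -> sc fl0 a b = x.+1 -> Rk x.+1 = (Rk x).+1.
Proof.
move=> h e; apply: (rk_succ sc0S_inj (edge_in h)); by rewrite sc0S_edge.
Qed.

Lemma Rk_mono x y : x <= y -> Rk x <= Rk y.
Proof. exact: rk_mono. Qed.

Definition xk t := Z1 + 2 * key t.

Lemma adj_far t : adj (inl (spv (part t))) (inr t).
Proof. by rewrite /= attachedE ix_spv; lia. Qed.

Lemma adj_near t : adj (inl (spv (part t + 3))) (inr t).
Proof. by rewrite /= attachedE ix_spv; lia. Qed.

Lemma nb_far t : nb (spv (part t)) t = false.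
Proof. by rewrite /nb ix_spv; have := ltn_ord (part t); lia. Qed.

Lemma nb_near t : nb (spv (part t + 3)) t = true.
Proof. by rewrite /nb ix_spv; lia. Qed.

Lemma sc_far fl t : sc fl (inl (spv (part t))) (inr t) = xk t + fl t.
Proof. by rewrite /= nb_far /xk addnA. Qed.

Lemma sc_near fl t : sc fl (inl (spv (part t + 3))) (inr t) = xk t + ~~ fl t.
Proof. by rewrite /= nb_near /xk addnA. Qed.

Lemma adj_sp c : c < 3 * p -> adj (inl (spv c)) (inl (spv (c + 3))).
Proof. by move=> hc; rewrite /= spider_adjE !ix_spv; lia. Qed.

Lemma sc_sp fl c : c < 3 * p -> sc fl (inl (spv c)) (inl (spv (c + 3))) = Z2 + c.
Proof. by move=> hc; rewrite /= !ix_spv; congr addn; lia. Qed.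

Lemma lab_real fl a b : adj a b -> exists a' b', adj a' b' /\ sc fl a b = sc fl0 a' b'.
Proof.
have key_s s t : attached part s t ->
    exists a' b', adj a' b' /\ Z1 + (2 * key t + (nb s t (+) fl t)) = sc fl0 a' b'.
  move=> h; case: (boolP (nb s t (+) fl t)) => hb.
    exists (inl (spv (part t + 3))), (inr t); split; first exact: adj_near.
    by rewrite sc_near /= /xk addnA.
  exists (inl (spv (part t))), (inr t); split; first exact: adj_far.
  by rewrite sc_far /= /xk addnA.
case: a b => [s|u] [s'|v] h.
- by exists (inl s), (inl s').
- exact: key_s.
- exact: key_s.
- by exists (inr u), (inr v).
Qed.

Lemma lab_sym fl a b : adj a b -> lab fl a b = lab fl b a.
Proof. by move=> h; rewrite /lab sc_sym. Qed.

Lemma ff_edge fl a b : adj a b -> ff fl [set a; b] = lab fl a b.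
Proof. by move=> h; rewrite /ff setfun2 ?adj_neq // lab_sym. Qed.

Lemma ff_range fl S : S \in E -> 0 < ff fl S <= #|E|.
Proof.
move=> /edgeP [a [b [h ->]]]; rewrite ff_edge // /lab.
have [a' [b' [h' ->]]] := lab_real fl h.
rewrite -sc0S_edge // rk_le andbT; apply: rk_pos; exact: edge_in.
Qed.

Lemma ff_inj fl : {in E &, injective (ff fl)}.
Proof.
move=> S S' /edgeP [a [b [h ->]]] /edgeP [a' [b' [h' ->]]].
rewrite !ff_edge // /lab => e.
apply: (sc_inj (fl := fl)) => //.
have [c [d [hc ec]]] := lab_real fl h.
have [c' [d' [hc' ec']]] := lab_real fl h'.
move: e; rewrite ec ec' -!sc0S_edge // => /(rk_inj sc0S_inj (edge_in hc) (edge_in hc')) e.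
by rewrite -e.
Qed.

Lemma vsumE fl v : vsum adj (ff fl) v = \sum_(w | adj v w) lab fl v w.
Proof. apply: vsum_nb; [exact: sgG | exact: lab_sym]. Qed.

Definition hs t := P t + Rk (xk t) + Rk (xk t).+1.
Definition R c := Rk (Z2 + c).

Lemma Rk_xk1 t : Rk (xk t).+1 = (Rk (xk t)).+1.
Proof. by apply: (Rk_succ (adj_near t)); rewrite sc_near addn1. Qed.

Lemma lab_spoke fl s t : attached part s t ->
  lab fl (inl s) (inr t) = Rk (xk t) + (nb s t (+) fl t).
Proof.
move=> _; rewrite /lab /= -/(xk t) addnA.
by case: (nb s t (+) fl t); rewrite ?addn0 ?addn1 ?Rk_xk1.
Qed.

Lemma RkI_Rk u v : RkI (isc u v) = Rk (isc u v).
Proof.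
rewrite /RkI /Rk /rk; apply: eq_card => S; rewrite !in_set.
case SE: [exists _, _] => //=.
have SE' : S \in E by rewrite inE SE.
have [a [b [h ->]]] := edgeP SE'.
rewrite sc0S_edge // setfun2 ?adj_neq //; last first.
  by case: a b h => [s|u'] [s'|v'] //= h; rewrite /isc /pidx (part_adj h) minnC maxnC.
have := isc_lt u v.
by case: a b h => [s|u'] [s'|v'] //= h; rewrite /Z2; lia.
Qed.

Lemma P_Rk t : P t = \sum_(w | eH t w) Rk (isc t w).
Proof. by apply: eq_bigr => w _; rewrite RkI_Rk. Qed.

Lemma attached_spv s t :
  attached part s t = (s == spv (part t)) || (s == spv (part t + 3)).
Proof. by rewrite attachedE !eq_spv; have := ltn_ord (part t); lia. Qed.

Lemma spv_far_near t : spv (part t) != spv (part t + 3).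
Proof. by rewrite eq_spv ix_spv; have := ltn_ord (part t); lia. Qed.

Lemma vsum_H fl t : vsum adj (ff fl) (inr t) = hs t.
Proof.
rewrite vsumE big_sumType /=.
rewrite (eq_bigl (fun s => s \in [set spv (part t); spv (part t + 3)])); last first.
  by move=> s; rewrite attached_spv !inE.
rewrite big_setU1 ?inE ?spv_far_near //= big_set1.
rewrite -!(lab_sym fl (adj_far t)) -!(lab_sym fl (adj_near t)).
rewrite !lab_spoke; last exact: adj_far; last exact: adj_near.
rewrite (nb_far t) (nb_near t) /hs P_Rk Rk_xk1.
have -> : \sum_(i | eH t i) lab fl (inr t) (inr i) = \sum_(w | eH t w) Rk (isc t w) by [].
by case: (fl t) => /=; lia.
Qed.

Lemma vsum_S fl s : vsum adj (ff fl) (inl s) =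
  \sum_(s' | spider_adj s s') Rk (Z2 + minn (ix s) (ix s')) +
  \sum_(t | attached part s t) lab fl (inl s) (inr t).
Proof. by rewrite vsumE big_sumType. Qed.

Lemma sp_part i : i < 3 * p ->
  \sum_(s' | spider_adj (spv i) s') Rk (Z2 + minn (ix (spv i)) (ix s')) =
  R i + (if 3 <= i then R (i - 3) else 0).
Proof.
move=> hi; rewrite (bigD1 (spv (i + 3))) /=; last by rewrite spider_adjE !ix_spv; lia.
rewrite !ix_spv /R.
have -> : minn (minn i (3 * p)) (minn (i + 3) (3 * p)) = i by lia.
case: ifP => h3.
- rewrite (eq_bigl (fun s' => s' == spv (i - 3))); last first.
    by move=> s'; rewrite spider_adjE !eq_spv !ix_spv; have := ix_le s'; lia.
  rewrite big_pred1_eq ix_spv; congr (_ + Rk (_ + _)); lia.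
- rewrite big_pred0 ?addn0 //.
  by move=> s'; rewrite spider_adjE !eq_spv !ix_spv; have := ix_le s'; lia.
Qed.

Lemma sk_part fl i : i < 3 * p ->
  \sum_(t | attached part (spv i) t) lab fl (inl (spv i)) (inr t) =
  \sum_(t | part t == i :> nat) (Rk (xk t) + fl t) +
  \sum_(t | part t + 3 == i) (Rk (xk t) + ~~ fl t).
Proof.
move=> hi; rewrite big_mkcond [X in _ = X + _]big_mkcond [X in _ = _ + X]big_mkcond.
rewrite -big_split; apply: eq_bigr => t _ /=.
have hp := ltn_ord (part t).
case: ifP => ha; last first.
  move: ha; rewrite attachedE ix_spv => ha.
  by case: ifP; case: ifP => //; lia.
rewrite lab_spoke // /nb ix_spv; move: ha; rewrite attachedE ix_spv => ha.
by case: ifP; case: ifP; case: (fl t) => /=; lia.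
Qed.

Lemma center_sp : R (3 * p - 1) + R (3 * p - 2) <=
  \sum_(s' | spider_adj None s') Rk (Z2 + minn (ix None) (ix s')).
Proof.
rewrite (bigD1 (spv (3 * p - 1))); last by rewrite spider_adjE !ix_spv /=; lia.
rewrite (bigD1 (spv (3 * p - 2))); last first.
  by rewrite spider_adjE !eq_spv !ix_spv /=; lia.
rewrite /= !ix_spv /R.
have -> : minn (3 * p) (minn (3 * p - 1) (3 * p)) = 3 * p - 1 by lia.
have -> : minn (3 * p) (minn (3 * p - 2) (3 * p)) = 3 * p - 2 by lia.
by rewrite addnA leq_addr.
Qed.

Lemma center_sk fl :
  \sum_(t | part t == 3 * p - 1 :> nat) (Rk (xk t) + ~~ fl t) +
  \sum_(t | part t == 3 * p - 2 :> nat) (Rk (xk t) + ~~ fl t) <=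
  \sum_(t | attached part None t) lab fl (inl None) (inr t).
Proof.
rewrite [X in _ <= X]big_mkcond [X in X + _ <= _]big_mkcond [X in _ + X <= _]big_mkcond.
rewrite -big_split; apply: leq_sum => t _.
have hp := ltn_ord (part t).
case: (boolP (attached part None t)) => ha; last first.
  rewrite /=; move: ha; rewrite attachedE /= => ha.
  by case: ifP => h1; case: ifP => h2; lia.
rewrite /= lab_spoke // /nb /=; move: ha; rewrite attachedE /= => ha.
by case: ifP => h1; case: ifP => h2; case: (fl t) => /=; lia.
Qed.

Definition pk (i : nat) : option T := [pick t | part t == i :> nat].
Definition flF (F : nat -> bool) (t : T) : bool := (pk (part t) == Some t) && F (part t).

Lemma part_ex i : i < 3 * p -> exists a, part a == i :> nat.
Proof.
move=> hi; have := Hsz (Ordinal hi) => /ltnW; rewrite card_gt0 => /set0Pn [a].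
by rewrite inE => ha; exists a.
Qed.

Lemma sum_fl F i : i < 3 * p -> \sum_(t | part t == i :> nat) flF F t = F i.
Proof.
move=> hi; have [a0 ha0] := part_ex hi.
have [a ha pka] : exists2 a, part a == i :> nat & pk i = Some a.
  by rewrite /pk; case: pickP => [a ha|/(_ a0)]; [exists a | rewrite ha0].
rewrite (eq_bigr (fun t => nat_of_bool ((t == a) && F i))); last first.
  by move=> t /eqP ht; rewrite /flF ht pka eq_sym.
rewrite (bigD1 a) //= eqxx big1 ?addn0 // => t /andP [_ /negPf ->].
by [].
Qed.

Lemma Rk_xk_far u : Rk (xk u) = Rk (sc fl0 (inl (spv (part u))) (inr u)).
Proof. by rewrite sc_far addn0. Qed.

Lemma xk_lt t u : key t < key u -> (Rk (xk t)).+1 < Rk (xk u).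
Proof.
move=> h; rewrite -Rk_xk1 Rk_xk_far; apply: Rk_lt; first exact: adj_far.
rewrite sc_far /xk /=; lia.
Qed.

Lemma xk_R t c : c < 3 * p -> (Rk (xk t)).+1 < R c.
Proof.
move=> hc; rewrite -Rk_xk1 /R -(sc_sp fl0 hc); apply: Rk_lt; first exact: adj_sp.
rewrite sc_sp // /xk /Z2; have := key_lt t; lia.
Qed.

Lemma R_lt c d : c < d -> d < 3 * p -> R c < R d.
Proof.
move=> cd hd; rewrite /R -(sc_sp fl0 hd); apply: Rk_lt; first exact: adj_sp.
rewrite sc_sp //; lia.
Qed.

Lemma int_le_xk u w t : Rk (isc u w) <= Rk (xk t).
Proof. apply: Rk_mono; have := isc_lt u w; rewrite /xk; lia. Qed.

Lemma card_part i j : i <= j -> j < 3 * p ->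
  #|[set t | part t == i :> nat]| <= #|[set t | part t == j :> nat]|.
Proof. move=> ij hj; exact: (Hmono (i := Ordinal (leq_ltn_trans ij hj)) (j := Ordinal hj)). Qed.

Lemma deg_chain d t u : part u = part t + d.+1 :> nat -> deg eH t <= deg eH u.
Proof.
elim: d u => [|d IH] u hu.
  apply: (Hdeg (i := part t)); rewrite ?inE ?eqxx //; first by have := ltn_ord (part u); lia.
  by rewrite hu addn1.
have [w /eqP hw] := part_ex (i := part t + d.+1) (ltac:(have := ltn_ord (part u); lia)).
apply: leq_trans (IH w hw) _.
apply: (Hdeg (i := part w)); rewrite ?inE ?eqxx //; first by have := ltn_ord (part u); lia.
by rewrite hu hw; apply/eqP; lia.
Qed.

Lemma sumS (G : T -> nat) (Q : pred T) :
  \sum_(t | Q t) G t = \sum_(t in [set t | Q t]) G t.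
Proof. by apply: eq_bigl => t; rewrite inE. Qed.

Lemma P_mono t u : key t < key u -> P t <= P u.
Proof.
move=> h; have := key_part (ltnW h).
rewrite leq_eqVlt => /orP [/eqP e|hp]; first by apply: key_P; [exact: val_inj | exact: ltnW].
rewrite (P_Rk t) (P_Rk u).
rewrite (sumS (fun w => Rk (isc t w))) (sumS (fun w => Rk (isc u w))).
apply: (sum_unif (g := fun w => Rk (isc t w)) (h := fun w => Rk (isc u w))).
  have := @deg_chain (part u - part t).-1 t u.
  rewrite /deg; apply; lia.
move=> w w' _ _; apply: Rk_mono; rewrite /isc; apply: ltnW.
apply: leq_trans (leq_addr _ _); apply: lex_lt => //; exact: pidx_lt.
Qed.

Lemma hs_gap t u : key t < key u -> hs t + 4 <= hs u.
Proof.
move=> h; have := P_mono h; have := xk_lt h; rewrite /hs !Rk_xk1; lia.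
Qed.

Lemma hs_inj : injective hs.
Proof.
move=> t u e; apply: key_inj; case: (ltngtP (key t) (key u)) => // h.
  by have := hs_gap h; rewrite e; lia.
by have := hs_gap h; rewrite e; lia.
Qed.

Lemma hs_nsucc t u : hs u != (hs t).+1.
Proof.
case: (ltngtP (key t) (key u)) => h.
- by have := hs_gap h; lia.
- by have := hs_gap h; lia.
- by rewrite (key_inj h); lia.
Qed.

Definition Sv F i := vsum adj (ff (flF F)) (inl (spv i)).

Lemma Sv_form F i : i < 3 * p -> Sv F i =
  R i + (if 3 <= i then R (i - 3) else 0) +
  (\sum_(t | part t == i :> nat) (Rk (xk t) + flF F t) +
   \sum_(t | part t + 3 == i) (Rk (xk t) + ~~ flF F t)).
Proof. by move=> hi; rewrite /Sv vsum_S sp_part // sk_part. Qed.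

Lemma sum_sh (fl fl' : T -> bool) (Pa Pb : pred T) :
  #|[set t | Pa t]| <= #|[set t | Pb t]| ->
  (forall t u, Pa t -> Pb u -> part t < part u) ->
  \sum_(t | Pa t) (Rk (xk t) + fl t) <= \sum_(u | Pb u) (Rk (xk u) + fl' u).
Proof.
move=> hc hp; rewrite (sumS _ Pa) (sumS _ Pb); apply: sum_unif => // t u; rewrite !inE => ht hu.
have := xk_lt (part_key (hp _ _ ht hu)); case: (fl t); case: (fl' u) => /=; lia.
Qed.

Lemma card_part3 i : i.+1 < 3 * p ->
  #|[set t | part t + 3 == i]| <= #|[set t | part t + 3 == i.+1]|.
Proof.
move=> hi; case: (ltnP i 3) => h3.
  rewrite (_ : [set t | part t + 3 == i] = set0) ?cards0 //.
  by apply/setP => t; rewrite !inE; lia.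
rewrite (_ : [set t | part t + 3 == i] = [set t | part t == i - 3 :> nat]); last first.
  by apply/setP => t; rewrite !inE; lia.
rewrite (_ : [set t | part t + 3 == i.+1] = [set t | part t == i.+1 - 3 :> nat]); last first.
  by apply/setP => t; rewrite !inE; lia.
apply: card_part; lia.
Qed.

Lemma Sv_step F i : i.+1 < 3 * p -> Sv F i < Sv F i.+1.
Proof.
move=> hi; rewrite !Sv_form //; last by lia.
have h1 : R i < R i.+1 by apply: R_lt.
have h2 : (if 3 <= i then R (i - 3) else 0) <= (if 3 <= i.+1 then R (i.+1 - 3) else 0).
  case: ifP => h; last by [].
  rewrite ifT; last by lia.
  by apply: ltnW; apply: R_lt; lia.
have h3 : \sum_(t | part t == i :> nat) (Rk (xk t) + flF F t) <=
          \sum_(t | part t == i.+1 :> nat) (Rk (xk t) + flF F t).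
  apply: sum_sh; first by apply: card_part; lia.
  by move=> t u /eqP -> /eqP ->.
have h4 : \sum_(t | part t + 3 == i) (Rk (xk t) + ~~ flF F t) <=
          \sum_(t | part t + 3 == i.+1) (Rk (xk t) + ~~ flF F t).
  apply: sum_sh; first exact: card_part3.
  by move=> t u /eqP ht /eqP hu; lia.
lia.
Qed.

Lemma sum_split_fl F i : i < 3 * p ->
  \sum_(t | part t == i :> nat) (Rk (xk t) + flF F t) =
  \sum_(t | part t == i :> nat) Rk (xk t) + F i.
Proof. by move=> hi; rewrite big_split /= sum_fl. Qed.

Lemma Sv_center F : Sv F (3 * p - 1) < vsum adj (ff (flF F)) (inl None).
Proof.
have hp1 : 3 * p - 1 < 3 * p by lia.
rewrite Sv_form // vsum_S ifT; last by lia.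
have c1 := center_sp; have c2 := center_sk (flF F).
have e1 := sum_split_fl F hp1.
have h1 : \sum_(t | part t == 3 * p - 1 :> nat) Rk (xk t) <=
          \sum_(t | part t == 3 * p - 1 :> nat) (Rk (xk t) + ~~ flF F t).
  by apply: leq_sum => t _; apply: leq_addr.
have h2 : \sum_(t | part t + 3 == 3 * p - 1) (Rk (xk t) + ~~ flF F t) <=
          \sum_(t | part t == 3 * p - 2 :> nat) (Rk (xk t) + ~~ flF F t).
  apply: sum_sh; last by move=> t u /eqP ht /eqP hu; lia.
  rewrite (_ : [set t | part t + 3 == 3 * p - 1] = [set t | part t == 3 * p - 4 :> nat]).
    apply: card_part; lia.
  by apply/setP => t; rewrite !inE; lia.
have h3 : R (3 * p - 1 - 3) < R (3 * p - 3) by apply: R_lt; lia.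
have h4 : R (3 * p - 3) < R (3 * p - 2) by apply: R_lt; lia.
have hF : F (3 * p - 1) <= 1 by case: (F _).
have t1 : R (3 * p - 1 - 3) + 2 <= R (3 * p - 2) by lia.
have t2 : \sum_(t | part t == 3 * p - 1 :> nat) (Rk (xk t) + flF F t) <=
  \sum_(t | part t == 3 * p - 1 :> nat) (Rk (xk t) + ~~ flF F t) + 1 by lia.
apply: leq_trans (leq_add c1 c2).
lia.
Qed.

Lemma center_gt F u : hs u < vsum adj (ff (flF F)) (inl None).
Proof.
rewrite vsum_S.
have c1 := center_sp; have c2 := center_sk (flF F).
have r1 := @xk_R u (3 * p - 2) ltac:(lia).
have r2 := @xk_R u (3 * p - 1) ltac:(lia).
have hP : P u <= \sum_(t | part t == 3 * p - 1 :> nat) (Rk (xk t) + ~~ flF F t).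
  rewrite P_Rk (sumS (fun w => Rk (isc u w))).
  rewrite (sumS (fun t => Rk (xk t) + ~~ flF F t)).
  apply: sum_unif.
    apply: leq_trans (card_part (i := part u) _ _); last by lia.
      apply: subset_leq_card; apply/subsetP => w; rewrite !inE => hw.
      by rewrite (part_adj hw).
    by have := ltn_ord (part u); lia.
  by move=> w t _ _; apply: leq_trans (int_le_xk _ _ t) (leq_addr _ _).
apply: leq_trans (leq_add c1 c2).
rewrite /hs Rk_xk1; lia.
Qed.

Lemma Sv_None F : Sv F (3 * p) = vsum adj (ff (flF F)) (inl None).
Proof. by rewrite /Sv /spv ltnn. Qed.

Lemma Sv_mono F i j : i < j -> j <= 3 * p -> Sv F i < Sv F j.
Proof.
elim: j => [//|j IH] ij hj.
have step : Sv F j < Sv F j.+1.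
  case: (ltnP j.+1 (3 * p)) => h; first exact: Sv_step.
  have -> : j.+1 = 3 * p by lia.
  have -> : j = 3 * p - 1 by lia.
  rewrite Sv_None; exact: Sv_center.
move: ij; rewrite ltnS leq_eqVlt => /orP [/eqP -> //|ij].
apply: ltn_trans (IH ij (ltnW hj)) step.
Qed.

Lemma Sv_congr F F' i : i < 3 * p ->
  (forall t, (part t == i :> nat) || (part t + 3 == i) -> flF F' t = flF F t) ->
  Sv F' i = Sv F i.
Proof.
move=> hi hF; rewrite /Sv !vsum_S; congr addn; apply: eq_bigr => t ha.
rewrite /lab /= hF //; move: ha; rewrite attachedE ix_spv; lia.
Qed.

Lemma dodge : exists F, forall i, i < 3 * p -> forall t, Sv F i != hs t.
Proof.
suff : forall n, exists F, forall i, i < n -> i < 3 * p -> forall t, Sv F i != hs t.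
  by move=> /(_ (3 * p)) [F HF]; exists F => i hi; apply: HF.
elim=> [|n [F HF]]; first by exists (fun=> false).
case: (ltnP n (3 * p)) => hn; last first.
  by exists F => i hi hi3; apply: HF; lia.
pose Fb b := fun k => if k == n then b else F k.
have Sv_other b i : i < n -> Sv (Fb b) i = Sv F i.
  move=> hi; apply: Sv_congr; first by lia.
  by move=> t ht; rewrite /flF /Fb ifF //; lia.
have Sv_n b : Sv (Fb b) n = Sv (Fb false) n + b.
  rewrite !Sv_form // !sum_split_fl // /Fb !eqxx.
  have -> : \sum_(t | part t + 3 == n) (Rk (xk t) + ~~ flF (fun k => if k == n then b else F k) t) =
            \sum_(t | part t + 3 == n) (Rk (xk t) + ~~ flF (fun k => if k == n then false else F k) t).
    by apply: eq_bigr => t /eqP ht; rewrite /flF !ifF //; lia.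
  by case: b => /=; rewrite ?addn0 ?addn1 ?addnS ?addSn.
case: (boolP [forall t, Sv (Fb false) n != hs t]) => h.
  exists (Fb false) => i hi hi3 t.
  move: hi; rewrite ltnS leq_eqVlt => /orP [/eqP ->|hi]; first by move/forallP: h.
  by rewrite Sv_other //; apply: HF.
exists (Fb true) => i hi hi3 t.
move: hi; rewrite ltnS leq_eqVlt => /orP [/eqP ->|hi]; last first.
  by rewrite Sv_other //; apply: HF.
move/forallPn: h => [t1 /negPn /eqP e].
by rewrite Sv_n e addn1 eq_sym hs_nsucc.
Qed.

Lemma main : antimagic adj.
Proof.
have [F HF] := dodge.
exists (ff (flF F)); split.
- by move=> S SE; apply: ff_range.
- exact: ff_inj.
- have vS s : vsum adj (ff (flF F)) (inl s) = Sv F (ix s) by rewrite /Sv spv_ix.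
  have HS s u : vsum adj (ff (flF F)) (inl s) != hs u.
    rewrite vS; case: (ltnP (ix s) (3 * p)) => h; first exact: HF.
    have -> : ix s = 3 * p by have := ix_le s; lia.
    by rewrite Sv_None; apply/eqP => e; have := center_gt F u; rewrite e ltnn.
  case=> [s|t] [s'|u]; rewrite ?vsum_H.
  + rewrite !vS => e; congr inl; apply: ix_inj.
    case: (ltngtP (ix s) (ix s')) => // h.
      by have := Sv_mono F h (ix_le s'); rewrite e ltnn.
    by have := Sv_mono F h (ix_le s); rewrite e ltnn.
  + by move=> e; move: (HS s u); rewrite e eqxx.
  + by move=> e; move: (HS s' t); rewrite e eqxx.
  + by move=> /hs_inj ->.
Qed.

End Main.

Theorem theorem3 (p : nat) (T : finType) (part : T -> 'I_(3 * p)) (eH : rel T) :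
  2 < p ->
  H_family part eH ->
  (forall i : 'I_(3 * p), 2 <= #|Hverts part i|) ->
  (forall u v : T, part u = part v -> connect eH u v) ->
  (forall i j : 'I_(3 * p), i <= j -> #|Hverts part i| <= #|Hverts part j|) ->
  (forall (i : nat) (u v : T), i.+1 < 3 * p ->
      u \in Hverts part i -> v \in Hverts part i.+1 -> deg eH u <= deg eH v) ->
  (forall v, v \in Hverts part 1 ->
      deg (Gamma_adj part eH) (inl (legv p 0 p)) <= deg (Gamma_adj part eH) (inr v)) ->
  (forall v, v \in Hverts part 2 ->
      deg (Gamma_adj part eH) (inl (legv p 1 p)) <= deg (Gamma_adj part eH) (inr v)) ->
  (forall v, v \in Hverts part 3 ->
      deg (Gamma_adj part eH) (inl (legv p 2 p)) <= deg (Gamma_adj part eH) (inr v)) ->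
  (forall u, u \in Hverts part (3 * p - 4) ->
      deg (Gamma_adj part eH) (inr u) <= #|Hverts part 3| + 1) ->
  (forall v, v \in Hverts part (3 * p - 3) ->
      deg (Gamma_adj part eH) (inl (legv p 2 2)) <= deg (Gamma_adj part eH) (inr v)) ->
  antimagic (Gamma_adj part eH).
Proof.
move=> p2 Hf Hs _ Hm Hd _ _ _ _ _.
exact: (main p2 Hf Hs Hm Hd).
Qed.
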